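(* With the notation $\epsilon\in(0,4)$, $\mathcal{H}_\epsilon=\ell^2(\epsilon+4\mathbb{Z})$, $B(v)=\tfrac{27}{8}|v|\,\big||v+1|^{1/3}-|v-1|^{1/3}\big|^3$, $\tilde A(v)=|v|\,\big||v+1|-|v-1|\big|$, $(D\psi)(v)=\psi(v+2)-\psi(v-2)$, and $\hat\rho_1=-\tfrac{\rho_c}{8}D\,B\tilde A\,D$, $\hat\rho_2=-\tfrac{\rho_c}{8}B^{1/2}D\,\tilde A\,D\,B^{1/2}$ (functions acting by multiplication): $0$ is not an eigenvalue of $\hat\rho_1$ nor of $\hat\rho_2$, i.e. the equation $\hat\rho_i\psi=0$ has no nonzero normalizable solution $\psi\in\mathcal{H}_\epsilon$, so $\hat\rho_i$ is injective ($i=1,2$). *)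

(* Defs.v *)
From Stdlib Require Import Reals.
Open Scope R_scope.

(* |x|^{1/3}, with the convention 0^{1/3} = 0 (Stdlib's Rpower 0 y = 1). *)
Definition cbrt_abs (x : R) : R :=
  if Req_EM_T x 0 then 0 else Rpower (Rabs x) (1/3).

Definition Bfun (v : R) : R :=
  27/8 * Rabs v * (Rabs (cbrt_abs (v + 1) - cbrt_abs (v - 1))) ^ 3.

Definition Atil (v : R) : R :=
  Rabs v * Rabs (Rabs (v + 1) - Rabs (v - 1)).

Definition Dop (f : R -> R) (v : R) : R := f (v + 2) - f (v - 2).

Definition rho1 (rc : R) (f : R -> R) (v : R) : R :=
  - (rc / 8) * Dop (fun w => Bfun w * Atil w * Dop f w) v.

Definition rho2 (rc : R) (f : R -> R) (v : R) : R :=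
  - (rc / 8) * sqrt (Bfun v) *
    Dop (fun w => Atil w * Dop (fun u => sqrt (Bfun u) * f u) w) v.

Definition latt (eps : R) (n : Z) : R := eps + 4 * IZR n.

Definition lattice_summable (eps : R) (g : R -> R) : Prop :=
  exists l1 l2 : R,
    infinite_sum (fun k : nat => g (latt eps (Z.of_nat k))) l1 /\
    infinite_sum (fun k : nat => g (latt eps (- Z.of_nat k - 1)%Z)) l2.

(* Main.v *)
Require Import Defs.
From Stdlib Require Import Reals Lra Lia Psatz ZArith.
Open Scope R_scope.

Lemma cube_rpow (x : R) : 0 < x -> (Rpower x (1/3)) ^ 3 = x.
Proof.
  intro Hx. rewrite <- Rpower_pow by (unfold Rpower; apply exp_pos).
  rewrite Rpower_mult. replace (1/3 * INR 3) with 1 by (simpl; field).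
  now apply Rpower_1.
Qed.

Lemma rpow_pos (x : R) : 0 < Rpower x (1/3).
Proof. unfold Rpower; apply exp_pos. Qed.

Lemma cbrt_pos (x : R) : x <> 0 -> 0 < cbrt_abs x /\ cbrt_abs x ^ 3 = Rabs x.
Proof.
  intro Hx. unfold cbrt_abs. destruct (Req_EM_T x 0); [contradiction|].
  split; [apply rpow_pos| apply cube_rpow; now apply Rabs_pos_lt].
Qed.

Lemma B_bound (w : R) : 1 < w -> 0 <= Bfun w /\ Bfun w * (w-1)^2 <= w.
Proof.
  intro Hw. destruct (cbrt_pos (w+1)) as [Ha Ha3]; [lra|].
  destruct (cbrt_pos (w-1)) as [Hb Hb3]; [lra|].
  rewrite Rabs_right in Ha3 by lra. rewrite Rabs_right in Hb3 by lra.
  unfold Bfun. set (a := cbrt_abs (w+1)) in *. set (b := cbrt_abs (w-1)) in *.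
  assert (Hab : b < a).
  { destruct (Rlt_or_le b a) as [h|h]; auto.
    assert (a^3 <= b^3) by (apply pow_incr; lra). lra. }
  rewrite (Rabs_right (a - b)) by lra. rewrite Rabs_right by lra.
  assert (Hd0 : 0 < a - b) by lra.
  set (d := a - b) in *.
  assert (Hd : d * (a*a + a*b + b*b) = 2) by (unfold d; nra).
  assert (H1 : d * (3 * (b*b)) <= 2).
  { assert (0 <= d * d * (a + 2*b)) by (apply Rmult_le_pos; [nra|lra]).
    assert (d = a - b) by reflexivity. nra. }
  assert (H2 : (d * (3*(b*b)))^3 <= 8).
  { replace 8 with (2^3) by ring. apply pow_incr. assert (0 <= d) by lra. assert (0 <= b*b) by (apply Rmult_le_pos; lra). split; [apply Rmult_le_pos; lra| lra]. }
  assert (H3 : d^3 * 27 * (w-1)^2 <= 8).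
  { rewrite <- Hb3. replace ((d * (3*(b*b)))^3) with (d^3*27*(b^3)^2) in H2 by ring. lra. }
  assert (0 <= d^3) by (apply pow_le; lra).
  split; [nra|]. nra.
Qed.

Lemma Atil_big (w : R) : 1 <= w -> Atil w = 2 * w.
Proof.
  intro Hw. unfold Atil. rewrite (Rabs_right w) by lra.
  rewrite (Rabs_right (w+1)) by lra. rewrite (Rabs_right (w-1)) by lra.
  replace (w + 1 - (w - 1)) with 2 by ring. rewrite Rabs_right by lra. ring.
Qed.

Lemma g_bound (w : R) : 2 <= w -> Rabs (Bfun w * Atil w) <= 8.
Proof.
  intro Hw. destruct (B_bound w) as [H0 H1]; [lra|]. rewrite Atil_big by lra.
  rewrite Rabs_right by (apply Rle_ge, Rmult_le_pos; lra).
  assert (0 <= Bfun w * ((w-1)^2 - w^2/4)) by (apply Rmult_le_pos; nra). nra.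
Qed.

Lemma B_le2 (w : R) : 2 <= w -> Bfun w <= 2.
Proof. intro Hw. destruct (B_bound w) as [H0 H1]; [lra|].
  assert (0 <= Bfun w * ((w-1)^2 - w/2)) by (apply Rmult_le_pos; nra). nra. Qed.

Lemma cbrt_opp x : cbrt_abs (- x) = cbrt_abs x.
Proof.
  unfold cbrt_abs. rewrite Rabs_Ropp.
  destruct (Req_EM_T (-x) 0), (Req_EM_T x 0); auto; exfalso; lra.
Qed.

Lemma B_even w : Bfun (- w) = Bfun w.
Proof.
  unfold Bfun. rewrite Rabs_Ropp.
  replace (-w+1) with (-(w-1)) by ring. replace (-w-1) with (-(w+1)) by ring.
  rewrite !cbrt_opp. rewrite Rabs_minus_sym. reflexivity.
Qed.

Lemma sqrtB_le (v : R) : 2 <= Rabs v -> sqrt (Bfun v) <= 2.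
Proof.
  intro Hv. assert (Bfun v <= 2).
  { destruct (Rle_or_lt 0 v).
    - rewrite Rabs_right in Hv by lra. now apply B_le2.
    - rewrite Rabs_left in Hv by lra. rewrite <- B_even. apply B_le2; lra. }
  apply Rle_trans with (sqrt (2*2)); [apply sqrt_le_1_alt; lra|].
  rewrite sqrt_square; lra.
Qed.

Lemma cbrt_inj x y : x <> 0 -> y <> 0 -> cbrt_abs x = cbrt_abs y -> Rabs x = Rabs y.
Proof.
  intros Hx Hy E. destruct (cbrt_pos x Hx) as [_ H1]. destruct (cbrt_pos y Hy) as [_ H2].
  rewrite <- H1, <- H2, E. reflexivity.
Qed.

Lemma B_pos (w : R) : w <> 0 -> 0 < Bfun w.
Proof.
  intro Hw. unfold Bfun.
  assert (cbrt_abs (w+1) - cbrt_abs (w-1) <> 0).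
  { intro E.
    destruct (Req_dec (w+1) 0) as [h1|h1].
    - unfold cbrt_abs at 1 in E. destruct (Req_EM_T (w+1) 0); [|contradiction].
      destruct (cbrt_pos (w-1)) as [h _]; lra.
    - destruct (Req_dec (w-1) 0) as [h2|h2].
      + unfold cbrt_abs at 2 in E. destruct (Req_EM_T (w-1) 0); [|contradiction].
        destruct (cbrt_pos (w+1)) as [h _]; auto; lra.
      + assert (Rabs (w+1) = Rabs (w-1)) by (apply cbrt_inj; auto; lra).
        revert H. unfold Rabs; repeat destruct Rcase_abs; lra. }
  apply Rmult_lt_0_compat; [apply Rmult_lt_0_compat; [lra| now apply Rabs_pos_lt]|].
  apply pow_lt. now apply Rabs_pos_lt.
Qed.

Lemma Atil_pos (w : R) : w <> 0 -> 0 < Atil w.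
Proof.
  intro Hw. unfold Atil. apply Rmult_lt_0_compat; [now apply Rabs_pos_lt|].
  apply Rabs_pos_lt. unfold Rabs; repeat destruct Rcase_abs; lra.
Qed.

Lemma small_zero x : (forall e, 0 < e -> Rabs x < e) -> x = 0.
Proof.
  intro H. destruct (Req_dec x 0) as [h|h]; auto.
  specialize (H (Rabs x) (Rabs_pos_lt x h)). lra.
Qed.

Lemma sum_cv u l : infinite_sum u l -> Un_cv u 0.
Proof.
  intros H e He. destruct (H (e/2)) as [N HN]; [lra|].
  exists (S N). intros n Hn. destruct n as [|j]; [lia|].
  assert (h1 := HN (S j) ltac:(lia)). assert (h2 := HN j ltac:(lia)).
  unfold Rdist in *. unfold R_dist. simpl sum_f_R0 in h1.
  revert h1 h2. unfold Rabs; repeat destruct Rcase_abs; lra.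
Qed.

Lemma sq_cv (a u : nat -> R) : (forall k, a k ^ 2 <= u k) -> Un_cv u 0 -> Un_cv a 0.
Proof.
  intros Hle H e He. destruct (H (e*e)) as [N HN]; [nra|].
  exists N. intros n Hn. specialize (HN n Hn). specialize (Hle n). unfold R_dist in *.
  rewrite Rminus_0_r in *. revert HN. unfold Rabs; repeat destruct Rcase_abs; nra.
Qed.

Lemma latt_S eps n : latt eps (n + 1) = latt eps n + 4.
Proof. unfold latt. rewrite plus_IZR. ring. Qed.

Lemma latt_ne0 eps n : 0 < eps < 4 -> latt eps n <> 0.
Proof.
  intros He. unfold latt. destruct (Z_le_gt_dec 0 n).
  - apply IZR_le in l. lra.
  - assert (IZR n <= -1) by (apply IZR_le; lia). lra.
Qed.

Lemma latt_nat eps k : latt eps (Z.of_nat k) = eps + 4 * INR k.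
Proof. unfold latt. now rewrite INR_IZR_INZ. Qed.

Lemma latt_neg eps k : latt eps (- Z.of_nat k - 1) = eps - 4 * INR k - 4.
Proof. unfold latt. rewrite minus_IZR, opp_IZR, <- INR_IZR_INZ. ring. Qed.

Lemma tails_zero eps (p : Z -> R) : 0 < eps < 4 ->
  (forall n, latt eps n + 2 <> 0 -> p (n + 1)%Z = p n) ->
  Un_cv (fun k => p (Z.of_nat k)) 0 -> Un_cv (fun k => p (- Z.of_nat k - 1)%Z) 0 ->
  forall n, p n = 0.
Proof.
  intros He Hs H1 H2.
  assert (P1 : forall j k, p (Z.of_nat j) = p (Z.of_nat (j + k))).
  { intros j k. induction k as [|k IH]. - now rewrite Nat.add_0_r.
    - rewrite IH. replace (Z.of_nat (j + S k)) with (Z.of_nat (j + k) + 1)%Z by lia.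
      symmetry. apply Hs. rewrite latt_nat. pose proof (pos_INR (j+k)%nat). intro; lra. }
  assert (P2 : forall j k, p (- Z.of_nat j - 1)%Z = p (- Z.of_nat (j + k) - 1)%Z).
  { intros j k. induction k as [|k IH]. - now rewrite Nat.add_0_r.
    - rewrite IH. replace (- Z.of_nat (j + k) - 1)%Z with ((- Z.of_nat (j + S k) - 1) + 1)%Z by lia.
      apply Hs. rewrite latt_neg. assert (1 <= INR (j + S k)) by (replace 1 with (INR 1) by reflexivity; apply le_INR; lia). intro; lra. }
  assert (Q1 : forall j, p (Z.of_nat j) = 0).
  { intro j. apply small_zero. intros e He'. destruct (H1 e He') as [N HN].
    rewrite (P1 j N). specialize (HN (j+N)%nat ltac:(lia)). unfold R_dist in HN.
    now rewrite Rminus_0_r in HN. }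
  assert (Q2 : forall j, p (- Z.of_nat j - 1)%Z = 0).
  { intro j. apply small_zero. intros e He'. destruct (H2 e He') as [N HN].
    rewrite (P2 j N). specialize (HN (j+N)%nat ltac:(lia)). unfold R_dist in HN.
    now rewrite Rminus_0_r in HN. }
  intro n. destruct (Z_le_gt_dec 0 n).
  - rewrite <- (Z2Nat.id n) by lia. apply Q1.
  - replace n with (- Z.of_nat (Z.to_nat (- n - 1)) - 1)%Z by lia. apply Q2.
Qed.

Lemma Zconst (F : Z -> R) : (forall n, F (n + 1)%Z = F n) -> forall n, F n = F 0%Z.
Proof.
  intros H n. induction n using Z.peano_ind.
  - reflexivity.
  - unfold Z.succ. now rewrite H.
  - rewrite <- IHn. rewrite <- (H (Z.pred n)). now rewrite Z.add_1_r, Z.succ_pred.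
Qed.

Lemma latt_e1 eps n : latt eps n + 2 + 2 = latt eps (n + 1).
Proof. rewrite latt_S. ring. Qed.
Lemma latt_e2 eps n : latt eps n + 2 - 2 = latt eps n.
Proof. ring. Qed.
Lemma latt_e3 eps n : latt eps n - 2 = latt eps (n - 1) + 2.
Proof. replace n with ((n - 1) + 1)%Z at 1 by lia. rewrite latt_S. ring. Qed.

Lemma part1 eps rc f : 0 < eps < 4 -> 0 < rc ->
  Un_cv (fun k => f (latt eps (Z.of_nat k))) 0 ->
  Un_cv (fun k => f (latt eps (- Z.of_nat k - 1)%Z)) 0 ->
  (forall n, rho1 rc f (latt eps n) = 0) -> forall n, f (latt eps n) = 0.
Proof.
  intros He Hrc H1 H2 Hr.
  set (F := fun n => Bfun (latt eps n + 2) * Atil (latt eps n + 2) *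
                      (f (latt eps (n + 1)) - f (latt eps n))).
  assert (Hrho : forall n, rho1 rc f (latt eps n) = - (rc / 8) * (F n - F (n - 1)%Z)).
  { intro n. unfold rho1, Dop, F. cbv beta.
    rewrite (latt_e3 eps n), !latt_e1, !latt_e2, Z.sub_add. reflexivity. }
  assert (HF : forall n, F (n + 1)%Z = F n).
  { intro n. specialize (Hr (n + 1)%Z). rewrite Hrho, Z.add_simpl_r in Hr.
    apply Rmult_integral in Hr. destruct Hr as [h|h]. - exfalso. lra. - lra. }
  assert (Hc : F 0%Z = 0).
  { apply small_zero. intros e He'. destruct (H1 (e/16)) as [N HN]; [lra|].
    rewrite <- (Zconst F HF (Z.of_nat N)). unfold F.
    assert (h1 := HN N ltac:(lia)). assert (h2 := HN (S N) ltac:(lia)).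
    unfold R_dist in *. rewrite Rminus_0_r in *.
    rewrite Nat2Z.inj_succ in h2. unfold Z.succ in h2.
    rewrite Rabs_mult. assert (hg := g_bound (latt eps (Z.of_nat N) + 2)).
    rewrite latt_nat in hg. specialize (hg ltac:(pose proof (pos_INR N); lra)).
    rewrite latt_nat at 1 2.
    pose proof (Rabs_triang (f (latt eps (Z.of_nat N + 1))) (- f (latt eps (Z.of_nat N)))).
    rewrite Rabs_Ropp in H.
    assert (0 <= Rabs (f (latt eps (Z.of_nat N + 1)) - f (latt eps (Z.of_nat N)))) by apply Rabs_pos.
    unfold Rminus. set (g := Rabs (Bfun _ * _)) in *. set (X := Rabs (_ + - _)) in *. assert (0 <= X) by apply Rabs_pos. assert (0 <= g) by apply Rabs_pos. nra. }
  assert (Hs : forall n, latt eps n + 2 <> 0 -> f (latt eps (n + 1)) = f (latt eps n)).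
  { intros n Hn. assert (F n = 0) by (rewrite (Zconst F HF n); exact Hc).
    unfold F in H. apply Rmult_integral in H. destruct H as [h|h]; [|lra].
    exfalso. pose proof (B_pos _ Hn). pose proof (Atil_pos _ Hn). nra. }
  exact (tails_zero eps (fun n => f (latt eps n)) He Hs H1 H2).
Qed.

Fixpoint Hs (eps : R) (k : nat) : R :=
  match k with 0%nat => 0 | S k => Hs eps k + / (2 * (eps + 2 + 4 * INR k)) end.

Lemma ln_step y : 0 < y -> ln (y + 4) - ln y <= 4 / y.
Proof.
  intro Hy. replace (y + 4) with (y * (1 + 4 / y)) by (field; lra).
  rewrite ln_mult by (try lra; assert (0 < 4/y) by (apply Rdiv_lt_0_compat; lra); lra).
  assert (0 < 4/y) by (apply Rdiv_lt_0_compat; lra).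
  assert (ln (1 + 4/y) < ln (exp (4/y))).
  { apply ln_increasing; [lra|]. apply exp_ineq1. intro; lra. }
  rewrite ln_exp in H0. lra.
Qed.

Lemma Hs_lb eps : 0 < eps -> forall k, (ln (eps + 2 + 4 * INR k) - ln (eps + 2)) / 8 <= Hs eps k.
Proof.
  intros He k. induction k as [|k IH].
  - simpl. replace (eps + 2 + 4 * 0) with (eps + 2) by ring. lra.
  - simpl Hs. rewrite S_INR. pose proof (pos_INR k).
    set (y := eps + 2 + 4 * INR k) in *.
    replace (eps + 2 + 4 * (INR k + 1)) with (y + 4) by (unfold y; ring).
    assert (h := ln_step y ltac:(unfold y; lra)).
    replace (/ (2 * y)) with ((4 / y) / 8) by (field; unfold y; lra). lra.
Qed.

Lemma chi_cv (x : nat -> R) f : Un_cv (fun k => f (x k)) 0 ->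
  (forall k, (k >= 1)%nat -> 2 <= Rabs (x k)) ->
  Un_cv (fun k => sqrt (Bfun (x k)) * f (x k)) 0.
Proof.
  intros H Hx e He. destruct (H (e/2)) as [N HN]; [lra|]. exists (S N).
  intros n Hn. specialize (HN n ltac:(lia)). unfold R_dist in *. rewrite Rminus_0_r in *.
  rewrite Rabs_mult. pose proof (sqrtB_le _ (Hx n ltac:(lia))).
  rewrite (Rabs_right (sqrt _)) by (apply Rle_ge, sqrt_pos).
  pose proof (sqrt_pos (Bfun (x n))). pose proof (Rabs_pos (f (x n))). nra.
Qed.

Lemma exists_big (X : R) (N : nat) : exists k, (k >= N)%nat /\ X < INR k.
Proof.
  destruct (archimed X) as [h _].
  exists (Z.to_nat (up X) + N)%nat. split; [lia|].
  rewrite plus_INR. pose proof (pos_INR N).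
  destruct (Z_le_gt_dec 0 (up X)).
  - rewrite INR_IZR_INZ, Z2Nat.id by lia. lra.
  - pose proof (pos_INR (Z.to_nat (up X))). assert (IZR (up X) <= 0) by (apply IZR_le; lia). lra.
Qed.

Lemma part2 eps rc f : 0 < eps < 4 -> 0 < rc ->
  Un_cv (fun k => f (latt eps (Z.of_nat k))) 0 ->
  Un_cv (fun k => f (latt eps (- Z.of_nat k - 1)%Z)) 0 ->
  (forall n, rho2 rc f (latt eps n) = 0) -> forall n, f (latt eps n) = 0.
Proof.
  intros He Hrc H1 H2 Hr.
  set (chi := fun n => sqrt (Bfun (latt eps n)) * f (latt eps n)).
  set (G := fun n => Atil (latt eps n + 2) * (chi (n + 1)%Z - chi n)).
  assert (Hrho : forall n, rho2 rc f (latt eps n) = - (rc / 8) * sqrt (Bfun (latt eps n)) * (G n - G (n - 1)%Z)).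
  { intro n. unfold rho2, Dop, G, chi. cbv beta.
    rewrite (latt_e3 eps n), !latt_e1, !latt_e2, Z.sub_add. reflexivity. }
  assert (Hsq : forall n, sqrt (Bfun (latt eps n)) <> 0).
  { intro n. apply Rgt_not_eq, sqrt_lt_R0, B_pos, latt_ne0; auto. }
  assert (HF : forall n, G (n + 1)%Z = G n).
  { intro n. specialize (Hr (n + 1)%Z). rewrite Hrho, Z.add_simpl_r in Hr.
    apply Rmult_integral in Hr. destruct Hr as [h|h]; [|lra].
    apply Rmult_integral in h. destruct h as [h|h]; [exfalso; lra|].
    exfalso; exact (Hsq _ h). }
  assert (C1 : Un_cv (fun k => chi (Z.of_nat k)) 0).
  { apply (chi_cv (fun k => latt eps (Z.of_nat k)) f H1).
    intros k Hk. rewrite latt_nat. assert (1 <= INR k) by (replace 1 with (INR 1) by reflexivity; apply le_INR; lia).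
    rewrite Rabs_right; lra. }
  assert (C2 : Un_cv (fun k => chi (- Z.of_nat k - 1)%Z) 0).
  { apply (chi_cv (fun k => latt eps (- Z.of_nat k - 1)%Z) f H2).
    intros k Hk. rewrite latt_neg. assert (1 <= INR k) by (replace 1 with (INR 1) by reflexivity; apply le_INR; lia).
    rewrite Rabs_left; lra. }
  set (c := G 0%Z).
  assert (Hrel : forall k, chi (Z.of_nat k) - chi 0%Z = c * Hs eps k).
  { induction k as [|k IH].
    - simpl. ring.
    - simpl Hs. rewrite Nat2Z.inj_succ. unfold Z.succ.
      assert (hG : G (Z.of_nat k) = c) by (unfold c; apply Zconst, HF).
      unfold G in hG. rewrite latt_nat, Atil_big in hG by (pose proof (pos_INR k); lra).
      assert (chi (Z.of_nat k + 1)%Z - chi (Z.of_nat k) = c / (2 * (eps + 4 * INR k + 2))).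
      { rewrite <- hG. field. pose proof (pos_INR k). lra. }
      replace (eps + 2 + 4 * INR k) with (eps + 4 * INR k + 2) by ring. unfold Rdiv in H. lra. }
  assert (Hc : c = 0).
  { destruct (Req_dec c 0) as [h|h]; auto. exfalso.
    destruct (C1 1) as [N HN]; [lra|].
    set (M := (1 + Rabs (chi 0%Z)) / Rabs c).
    assert (hc : 0 < Rabs c) by (apply Rabs_pos_lt; auto).
    set (L := 8 * M + ln (eps + 2)).
    destruct (exists_big (exp L) N) as [k [Hk Hk2]].
    specialize (HN k Hk). unfold R_dist in HN. rewrite Rminus_0_r in HN.
    assert (Hb : Rabs c * Hs eps k <= 1 + Rabs (chi 0%Z)).
    { rewrite <- (Rabs_right (Hs eps k)).
      2:{ pose proof (Hs_lb eps ltac:(lra) k). assert (ln (eps + 2) <= ln (eps + 2 + 4 * INR k)).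
          { destruct (Req_dec (INR k) 0) as [z|z]; [rewrite z; right; f_equal; ring|].
            left. apply ln_increasing; [lra|]. pose proof (pos_INR k). lra. } lra. }
      rewrite <- Rabs_mult, <- Hrel.
      pose proof (Rabs_triang (chi (Z.of_nat k)) (- chi 0%Z)). rewrite Rabs_Ropp in H. unfold Rminus. lra. }
    assert (HM : Hs eps k <= M).
    { unfold M. apply (Rmult_le_reg_l (Rabs c)); auto. field_simplify; lra. }
    pose proof (Hs_lb eps ltac:(lra) k).
    assert (ln (eps + 2 + 4 * INR k) <= L) by (unfold L; lra).
    assert (ln (exp L) < ln (eps + 2 + 4 * INR k)).
    { pose proof (pos_INR k). apply ln_increasing; [apply exp_pos| lra]. }
    rewrite ln_exp in H3. lra. }
  assert (Hs' : forall n, latt eps n + 2 <> 0 -> chi (n + 1)%Z = chi n).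
  { intros n Hn. assert (G n = 0) by (rewrite (Zconst G HF n); exact Hc).
    unfold G in H. apply Rmult_integral in H. destruct H as [h|h]; [|lra].
    exfalso. pose proof (Atil_pos _ Hn). lra. }
  intro n. pose proof (tails_zero eps chi He Hs' C1 C2 n) as h.
  unfold chi in h. apply Rmult_integral in h. destruct h as [h|h]; auto.
  exfalso; exact (Hsq _ h).
Qed.

Theorem mainTheorem4 :
  forall (eps rc : R), 0 < eps < 4 -> 0 < rc ->
  forall re im : R -> R,
    lattice_summable eps (fun v => re v ^ 2 + im v ^ 2) ->
    ((forall n : Z, rho1 rc re (latt eps n) = 0 /\ rho1 rc im (latt eps n) = 0) ->
       forall n : Z, re (latt eps n) = 0 /\ im (latt eps n) = 0) /\
    ((forall n : Z, rho2 rc re (latt eps n) = 0 /\ rho2 rc im (latt eps n) = 0) ->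
       forall n : Z, re (latt eps n) = 0 /\ im (latt eps n) = 0).
Proof.
  intros eps rc He Hrc re im [l1 [l2 [S1 S2]]].
  apply sum_cv in S1. apply sum_cv in S2.
  assert (R1 : Un_cv (fun k => re (latt eps (Z.of_nat k))) 0).
  { eapply sq_cv; [|exact S1]. intro k; cbv beta. pose proof (pow2_ge_0 (im (latt eps (Z.of_nat k)))); lra. }
  assert (I1 : Un_cv (fun k => im (latt eps (Z.of_nat k))) 0).
  { eapply sq_cv; [|exact S1]. intro k; cbv beta. pose proof (pow2_ge_0 (re (latt eps (Z.of_nat k)))); lra. }
  assert (R2 : Un_cv (fun k => re (latt eps (- Z.of_nat k - 1)%Z)) 0).
  { eapply sq_cv; [|exact S2]. intro k; cbv beta. pose proof (pow2_ge_0 (im (latt eps (- Z.of_nat k - 1)%Z))); lra. }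
  assert (I2 : Un_cv (fun k => im (latt eps (- Z.of_nat k - 1)%Z)) 0).
  { eapply sq_cv; [|exact S2]. intro k; cbv beta. pose proof (pow2_ge_0 (re (latt eps (- Z.of_nat k - 1)%Z))); lra. }
  split; intros H n; split.
  - apply (part1 eps rc re He Hrc R1 R2). intro m; apply H.
  - apply (part1 eps rc im He Hrc I1 I2). intro m; apply H.
  - apply (part2 eps rc re He Hrc R1 R2). intro m; apply H.
  - apply (part2 eps rc im He Hrc I1 I2). intro m; apply H.
Qed.
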